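(* For every integer $n \ge 3$, the graph $K_n \otimes K_n$ is not a circulant graph.
   Context: Graphs have no multiple edges but may have loops. The tensor product $G \otimes H$ of graphs $G$ and $H$ has vertex set $V(G)\times V(H)$, with $(g,h)$ adjacent to $(g',h')$ if and only if $g$ is adjacent to $g'$ in $G$ and $h$ is adjacent to $h'$ in $H$. For an integer $n\ge 1$ and a set $S$ of integers, the circulant graph $C_nS$ has vertex set $\{0,1,\dots,n-1\}$, with $i$ adjacent to $j$ if and only if $i-j \equiv \pm s \pmod n$ for some $s\in S$. A graph is circulant if it is isomorphic to some $C_nS$; equivalently, if its automorphism group contains a cyclic subgroup acting transitively on the vertices. $K_n$ denotes the complete graph on $n$ vertices (no loops). *)

(* Defs.v *)
From mathcomp Require Import all_boot all_order all_algebra.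
Set Implicit Arguments. Unset Strict Implicit. Unset Printing Implicit Defensive.
Import GRing.Theory Num.Theory.
Local Open Scope ring_scope.

(* A graph (possibly with loops, no multiple edges) on a finite vertex type
   is given by its adjacency relation; graphs here are symmetric. *)

Definition complete_graph (n : nat) : rel 'I_n := fun x y => x != y.

Definition tensor_graph (T U : finType) (G : rel T) (H : rel U) : rel (T * U) :=
  fun p q => G p.1 q.1 && H p.2 q.2.

Definition circulant_adj (N : nat) (S : int -> Prop) (i j : 'I_N) : Prop :=
  exists s : int, S s /\
    ((((i%:Z - j%:Z) == s %[mod N%:Z])%Z) || (((i%:Z - j%:Z) == - s %[mod N%:Z])%Z)).

Definition is_circulant (T : finType) (G : rel T) : Prop :=
  exists (N : nat) (S : int -> Prop) (f : 'I_N -> T),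
    bijective f /\ forall i j : 'I_N, G (f i) (f j) <-> circulant_adj S i j.
Arguments complete_graph n : clear implicits.

(* Main.v *)
Require Import Defs.
From mathcomp Require Import all_boot all_order all_algebra.
From mathcomp Require Import zify.
Set Implicit Arguments. Unset Strict Implicit. Unset Printing Implicit Defensive.
Import GRing.Theory Num.Theory.

Definition sh N (hN : (0 < N)%N) (i : 'I_N) : 'I_N := Ordinal (ltn_pmod i.+1 hN).

Lemma modshift (N : nat) (i : nat) :
  ((i.+1 %% N)%:Z = i%:Z + 1 - (i.+1 %/ N)%:Z * N%:Z)%R.
Proof. have := divn_eq i.+1 N. lia. Qed.

Lemma circ_shift N S (hN : (0 < N)%N) (i j : 'I_N) :
  circulant_adj S (sh hN i) (sh hN j) <-> circulant_adj S i j.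
Proof.
have E : (((sh hN i)%:Z - (sh hN j)%:Z) %% N%:Z = (i%:Z - j%:Z) %% N%:Z)%Z.
  rewrite /= !modshift.
  have -> : ((i%:Z + 1 - (i.+1 %/ N)%:Z * N%:Z) - (j%:Z + 1 - (j.+1 %/ N)%:Z * N%:Z)
     = ((j.+1 %/ N)%:Z - (i.+1 %/ N)%:Z) * N%:Z + (i%:Z - j%:Z))%R.
    by rewrite mulrBl; lia.
  by rewrite modzMDl.
by rewrite /circulant_adj E.
Qed.
Section Main.
Variable n : nat.
Local Notation T := ('I_n * 'I_n)%type.
Local Notation G := (tensor_graph (complete_graph n) (complete_graph n)).

Definition colin (u v : T) := (u != v) && ~~ G u v.

Lemma colinE u v : colin u v = (u != v) && ((u.1 == v.1) || (u.2 == v.2)).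
Proof. by rewrite /colin /G /tensor_graph /complete_graph negb_and !negbK. Qed.

Definition row (a : 'I_n) : {set T} := [set u | u.1 == a].
Definition col (b : 'I_n) : {set T} := [set u | u.2 == b].
Definition lines : {set {set T}} := [set row a | a in 'I_n] :|: [set col b | b in 'I_n].

Lemma card_row a : #|row a| = n.
Proof.
have -> : row a = [set (a, b) | b : 'I_n].
  apply/setP => -[x y]; rewrite !inE /=; apply/eqP/imsetP => [->|[b _ [-> _]]]//.
  by exists y.
by rewrite card_imset ?card_ord // => x y [].
Qed.

Lemma card_col b : #|col b| = n.
Proof.
have -> : col b = [set (a, b) | a : 'I_n].
  apply/setP => -[x y]; rewrite !inE /=; apply/eqP/imsetP => [->|[a _ [_ ->]]]//.
  by exists x.
by rewrite card_imset ?card_ord // => x y [].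
Qed.

Lemma card_lines : (#|lines| <= n + n)%N.
Proof.
apply: leq_trans (leq_card_setU _ _) _.
by apply: leq_add; apply: leq_trans (leq_imset_card _ _) _; rewrite card_ord.
Qed.

Lemma clique_line (Y : {set T}) : #|Y| = n -> (1 < n)%N ->
  {in Y &, forall u v, u != v -> colin u v} -> Y \in lines.
Proof.
move=> cY n1 cl.
have : (1 < #|Y|)%N by rewrite cY.
case/card_gt1P => y1 [y2 [h1 h2 h12]].
have := cl _ _ h1 h2 h12; rewrite colinE h12 /= => /orP[/eqP e|/eqP e].
- have -> : Y = row y1.1.
    apply/eqP; rewrite eqEcard card_row cY leqnn andbT.
    apply/subsetP => z zY; rewrite inE.
    case: (eqVneq z y1) => [->//|zy1].
    case: (eqVneq z y2) => [->|zy2]; first by rewrite e.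
    have := cl _ _ zY h1 zy1; have := cl _ _ zY h2 zy2.
    rewrite !colinE zy1 zy2 /= => /orP[/eqP->|/eqP a2]; first by rewrite e.
    case/orP => // /eqP a1.
    have : y1 == y2 by apply/eqP/injective_projections => //=; rewrite -a1 a2.
    by rewrite (negbTE h12).
  by rewrite inE; apply/orP; left; apply/imsetP; exists y1.1.
- have -> : Y = col y1.2.
    apply/eqP; rewrite eqEcard card_col cY leqnn andbT.
    apply/subsetP => z zY; rewrite inE.
    case: (eqVneq z y1) => [->//|zy1].
    case: (eqVneq z y2) => [->|zy2]; first by rewrite e.
    have := cl _ _ zY h1 zy1; have := cl _ _ zY h2 zy2.
    rewrite !colinE zy1 zy2 /= => /orP[/eqP a2|/eqP->]; last by rewrite e.
    case/orP => [/eqP a1|//].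
    have : y1 == y2 by apply/eqP/injective_projections => //=; rewrite -a1 a2.
    by rewrite (negbTE h12).
  by rewrite inE; apply/orP; right; apply/imsetP; exists y1.2.
Qed.

Lemma line_colin X : X \in lines -> {in X &, forall u v, u != v -> colin u v}.
Proof.
case/setUP => /imsetP [a _ ->] u v; rewrite !inE colinE => /eqP ua /eqP va ->;
  by rewrite ua va eqxx ?orbT.
Qed.

Lemma iter_imset (σ : T -> T) k (X : {set T}) :
  iter k (fun Y : {set T} => σ @: Y) X = (iter k σ) @: X.
Proof.
elim: k => [|k IH] /=; first by rewrite imset_id.
by rewrite IH -imset_comp.
Qed.

Lemma no_long_orbit (hn : (3 <= n)%N) (σ : T -> T) (inj : injective σ)
  (aut : forall u v, G (σ u) (σ v) = G u v) (v0 : T) :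
  exists2 m, (0 < m < n * n)%N & iter m σ v0 = v0.
Proof.
have colinS u v : colin (σ u) (σ v) = colin u v by rewrite /colin aut (inj_eq inj).
pose π := fun X : {set T} => σ @: X.
have injπ : injective π := imset_inj inj.
have πL X : X \in lines -> π X \in lines.
  move=> XL; apply: clique_line; first by rewrite card_imset //; case/setUP: XL => /imsetP[a _ ->];
    rewrite ?card_row ?card_col.
    by apply: leq_trans hn.
  move=> _ _ /imsetP[u uX ->] /imsetP[v vX ->] ne; rewrite colinS.
  have uv : u != v by apply: contraNneq ne => ->.
  exact: (line_colin XL uX vX uv).
have iterL k X : X \in lines -> iter k π X \in lines.
  by move=> XL; elim: k => //= k IH; apply: πL.
have connL X Y : X \in lines -> fconnect π X Y -> Y \in lines.
  by move=> XL /(iter_findex) <-; apply: iterL.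
pose L1 := row v0.1; pose L2 := col v0.2.
have L1L : L1 \in lines by rewrite inE; apply/orP; left; apply/imsetP; exists v0.1.
have L2L : L2 \in lines by rewrite inE; apply/orP; right; apply/imsetP; exists v0.2.
pose o1 := order π L1; pose o2 := order π L2.
have ole X : X \in lines -> (order π X <= n + n)%N.
  move=> XL; apply: leq_trans card_lines; apply: subset_leq_card.
  by apply/subsetP => Y; apply: connL.
have iterM k X : iter (order π X * k) π X = X.
  elim: k => [|k IH]; first by rewrite muln0.
  by rewrite mulnS iterD IH iter_order.
have [m /andP[m0 mN] [e1 e2]] :
    exists2 m, (0 < m < n * n)%N & iter m π L1 = L1 /\ iter m π L2 = L2.
  case: (eqVneq o1 o2) => [e|ne].
    exists o1; last by split; [apply: iter_order | rewrite e; apply: iter_order].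
    have := ole _ L1L; have := order_gt0 π L1; rewrite -/o1.
    move=> h1 h2; apply/andP; split => //; nia.
  have disj : (o1 + o2 <= n + n)%N.
    apply: leq_trans card_lines; rewrite /o1 /o2 /order -cardUI.
    have -> : #|[predI fconnect π L1 & fconnect π L2]| = 0.
      apply: eq_card0 => Y; rewrite !inE; apply/negP => /andP[c1 c2].
      have c12 : fconnect π L1 L2.
        by apply: connect_trans c1 _; rewrite fconnect_sym.
      move: ne; rewrite /o1 /o2 /order.
      suff H : fconnect π L1 =i fconnect π L2 by rewrite (eq_card H) eqxx.
      move=> Z; rewrite -!topredE /=; apply/idP/idP => h.
        by apply: connect_trans h; rewrite fconnect_sym.
      by apply: connect_trans c12 h.
    rewrite addn0; apply: subset_leq_card; apply/subsetP => Y /orP[h|h].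
      exact: (connL _ _ L1L h).
    exact: (connL _ _ L2L h).
  exists (o1 * o2); last by split; [apply: iterM | rewrite mulnC; apply: iterM].
  have := order_gt0 π L1; have := order_gt0 π L2; rewrite -/o1 -/o2 => h1 h2.
  apply/andP; split; first by rewrite muln_gt0 h1 h2.
  move: ne => /eqP ne; nia.
have v0L1 : v0 \in L1 by rewrite inE.
have v0L2 : v0 \in L2 by rewrite inE.
exists m; first by rewrite m0 mN.
have : iter m σ v0 \in iter m π L1 by rewrite iter_imset; apply: imset_f.
rewrite e1 => h1.
have : iter m σ v0 \in iter m π L2 by rewrite iter_imset; apply: imset_f.
rewrite e2 => h2.
move: h1 h2; rewrite !inE => /eqP a /eqP b.
by apply: injective_projections.
Qed.

End Main.

Lemma modS_small N i : (i < N)%N -> i.+1 %% N = if i.+1 == N then 0 else i.+1.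
Proof.
move=> iN; case: eqP => [->|ne]; first by rewrite modnn.
by rewrite modn_small //; rewrite ltn_neqAle iN andbT; apply/eqP.
Qed.

Lemma sh_inj N (hN : (0 < N)%N) : injective (sh hN).
Proof.
move=> i j /(congr1 val) /= e; apply: val_inj => /=.
move: e; rewrite !modS_small //.
have := ltn_ord i; have := ltn_ord j.
by case: eqP; case: eqP; lia.
Qed.

Lemma iter_sh N (hN : (0 < N)%N) m : val (iter m (sh hN) (Ordinal hN)) = m %% N.
Proof.
elim: m => [|m IH] /=; first by rewrite mod0n.
by rewrite IH -addn1 modnDml addn1.
Qed.

Theorem theorem4 (n : nat) (hn : (3 <= n)%N) :
  ~ is_circulant (tensor_graph (complete_graph n) (complete_graph n)).
Proof.
move=> [N [S [f [[g fg gf] Hf]]]].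
have cardN : N = (n * n)%N.
  have := bij_eq_card (Bijective fg gf).
  by rewrite card_prod !card_ord.
have hN : (0 < N)%N by rewrite cardN; lia.
pose σ := fun u => f (sh hN (g u)).
have inj : injective σ.
  move=> u v /(can_inj fg) /(@sh_inj _ hN) /(can_inj gf) //.
have aut u v : tensor_graph (complete_graph n) (complete_graph n) (σ u) (σ v)
   = tensor_graph (complete_graph n) (complete_graph n) u v.
  rewrite /σ; apply/idP/idP => h.
    by rewrite -(gf u) -(gf v); apply/Hf/circ_shift/Hf.
  by apply/Hf/circ_shift/Hf; rewrite !gf.
have [m /andP[m0 mN] e] := no_long_orbit hn inj aut (f (Ordinal hN)).
have it k : iter k σ (f (Ordinal hN)) = f (iter k (sh hN) (Ordinal hN)).
  by elim: k => //= k ->; rewrite /σ fg.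
move: e; rewrite it => /(can_inj fg) /(congr1 val).
rewrite iter_sh /= -cardN in mN * => e.
move: e; rewrite modn_small //; lia.
Qed.
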